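(* Let $q$ be an odd prime power, $a\in\mathbb{F}_q$, and $n\ge1$ an integer with $\gcd(n+1,q)=1$. Then the code $C_n(a)$ is LCD if and only if $$a\notin\{-\mu+\theta^i+\theta^{-i} : 1\le i\le n\}\cup\{\mu+\theta^i+\theta^{-i} : 1\le i\le n\},$$ where $\mu\in\mathbb{F}_{q^2}$ satisfies $\mu^2=-1$ and $\theta\in\overline{\mathbb{F}}_q$ is a primitive $2(n+1)$-th root of unity.
   Context: For $a\in\mathbb{F}_q$ and $n \ge 1$, $T_n(a)$ denotes the $n\times n$ symmetric tridiagonal Toeplitz matrix over $\mathbb{F}_q$ with all diagonal entries equal to $a$, all entries on the first super- and sub-diagonals equal to $1$, and all other entries $0$. $C_n(a)$ is the $[2n,n]$ linear code over $\mathbb{F}_q$ with generator matrix $[I_n \mid T_n(a)]$. A linear code $C$ is LCD (linear complementary dual) if $C\cap C^\perp=\{0\}$, where $C^\perp$ is the dual with respect to the standard Euclidean inner product. *)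

(* Defs.v *)
From HB Require Import structures.
From mathcomp Require Import all_boot all_order all_algebra all_field.
Set Implicit Arguments. Unset Strict Implicit. Unset Printing Implicit Defensive.
Import GRing.Theory.
Local Open Scope ring_scope.

Definition tridiag {F : nzRingType} (n : nat) (a : F) : 'M[F]_n :=
  \matrix_(i < n, j < n)
    (if i == j then a
     else if ((i.+1 == j)%N || (j.+1 == i)%N) then 1 else 0).

Definition gen_Cn {F : nzRingType} (n : nat) (a : F) : 'M[F]_(n, n + n) :=
  row_mx 1%:M (tridiag n a).

(* The code generated by G (its row space) is LCD: C ∩ C^⊥ = {0}, where
   C^⊥ = {u | u *m G^T = 0} is the row space of kermx G^T. *)
Definition is_LCD {F : fieldType} (k m : nat) (G : 'M[F]_(k, m)) : bool :=
  ((G :&: kermx G^T)%MS == 0).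

(* Main.v *)
Require Import Defs.
From HB Require Import structures.
From mathcomp Require Import all_boot all_order all_algebra all_field.
From mathcomp Require Import zify ring.
Import GRing.Theory.
Local Open Scope ring_scope.

Lemma unitP' (K : fieldType) n (A : 'M[K]_n) :
  (forall v : 'rV_n, v *m A = 0 -> v = 0) <-> A \in unitmx.
Proof.
split; first by move=> h; rewrite -row_free_unit; apply: inj_row_free.
rewrite -row_free_unit => fr v /eqP; by rewrite mulmx_free_eq0 // => /eqP.
Qed.

Lemma tridiag_tr (K : nzRingType) n (b : K) : (tridiag n b)^T = tridiag n b.
Proof.
apply/matrixP=> i j; rewrite !mxE eq_sym orbC; done.
Qed.

Lemma LCD_iff (K : fieldType) n (a : K) :
  is_LCD (gen_Cn n a) <-> (1%:M + tridiag n a *m tridiag n a) \in unitmx.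
Proof.
have GG : gen_Cn n a *m (gen_Cn n a)^T = 1%:M + tridiag n a *m tridiag n a.
  by rewrite /gen_Cn tr_row_mx mul_row_col trmx1 mulmx1 tridiag_tr.
rewrite -unitP' -GG /is_LCD; split.
- move=> /eqP h v hv; suff: row_mx v (v *m tridiag n a) == 0 by rewrite row_mx_eq0 => /andP[/eqP].
  have -> : row_mx v (v *m tridiag n a) = v *m gen_Cn n a.
    by rewrite /gen_Cn mul_mx_row mulmx1.
  rewrite -submx0 -h sub_capmx submxMl /=; apply/sub_kermxP; by rewrite -mulmxA.
- move=> h; apply/eqP; apply/eqP; rewrite -submx0; apply/row_subP => i.
  have := row_sub i (gen_Cn n a :&: kermx (gen_Cn n a)^T)%MS.
  rewrite sub_capmx => /andP[/submxP[D ->] /sub_kermxP].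
  rewrite -mulmxA => /h ->; by rewrite mul0mx sub0mx.
Qed.

Lemma map_tridiag (F L : fieldType) (f : {rmorphism F -> L}) n (a : F) :
  map_mx f (tridiag n a) = tridiag n (f a).
Proof.
apply/matrixP=> i j; rewrite !mxE; case: (i == j) => //.
by case: (_ || _); rewrite ?rmorph1 ?rmorph0.
Qed.

Lemma tridiag_add (K : nzRingType) n (b c : K) :
  tridiag n b + c%:M = tridiag n (b + c).
Proof.
apply/matrixP=> i j; rewrite !mxE; case: (i == j) => //=; rewrite ?mulr1n ?mulr0n ?addr0 //.
Qed.

Lemma factor_unit (F L : fieldType) (f : {rmorphism F -> L}) n (a : F) (mu : L) :
  mu ^+ 2 = -1 ->
  (1%:M + tridiag n a *m tridiag n a) \in unitmx <->
  tridiag n (f a + mu) \in unitmx /\ tridiag n (f a - mu) \in unitmx.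
Proof.
move=> hmu.
rewrite -(map_unitmx f) map_mxD map_mx1 map_mxM map_tridiag.
rewrite -!tridiag_add.
have -> : 1%:M + tridiag n (f a) *m tridiag n (f a) = (tridiag n (f a) + mu%:M) *m (tridiag n (f a) + (- mu)%:M).
  rewrite mulmxDl !mulmxDr -scalar_mxM.
  have -> : mu * - mu = 1 by rewrite mulrN -expr2 hmu opprK.
  rewrite scalar_mxC !mul_scalar_mx scaleNr.
  by rewrite addrA subrK addrC.
by rewrite unitmx_mul; split => /andP.
Qed.

Fixpoint Pch (K : nzRingType) (k : nat) : {poly K} :=
  match k with
  | 0 => 0
  | S k' => match k' with 0 => 1 | S k'' => 'X * Pch K k' - Pch K k'' end
  end.

Lemma PchSS (K : nzRingType) k : Pch K k.+2 = 'X * Pch K k.+1 - Pch K k.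
Proof. by []. Qed.

Lemma size_Pch (K : idomainType) k : size (Pch K k) = k.
Proof.
suff: size (Pch K k) = k /\ size (Pch K k.+1) = k.+1 by case.
elim: k => [|k [IH1 IH2]]; first by rewrite /= size_poly0 size_poly1.
have nz : Pch K k.+1 != 0 by rewrite -size_poly_eq0 IH2.
split => //; rewrite PchSS size_polyDl mulrC size_mulX ?IH2 //.
by rewrite size_polyN IH1; lia.
Qed.

Lemma Pch_eval (K : fieldType) (t : K) k : t != 0 ->
  (Pch K k).[t + t^-1] * (t - t^-1) = t ^+ k - t ^- k.
Proof.
move=> t0.
suff: (Pch K k).[t + t^-1] * (t - t^-1) = t ^+ k - t ^- k /\
      (Pch K k.+1).[t + t^-1] * (t - t^-1) = t ^+ k.+1 - t ^- k.+1 by case.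
elim: k => [|k [IH1 IH2]].
  by rewrite /= horner0 hornerC mul0r mul1r expr0 invr1 subrr expr1.
split => //; rewrite PchSS !hornerE.
rewrite mulrBl -mulrA IH2 IH1 !exprS !invfM; field.
by rewrite t0 expf_neq0.
Qed.

Section Roots.
Variables (L : fieldType) (n : nat) (th : L).
Hypothesis hth : (2 * n.+1)%N.-primitive_root th.

Lemma th_neq0 : th != 0.
Proof.
apply/eqP => e; have := prim_expr_order hth; rewrite e expr0n.
by rewrite muln_eq0 /= => /eqP; rewrite eq_sym oner_eq0.
Qed.

Lemma th_half : th ^+ n.+1 = -1.
Proof.
have h2 : th ^+ n.+1 ^+ 2 = 1 by rewrite -exprM mulnC prim_expr_order.
have h1 : th ^+ n.+1 != 1.
  rewrite -(expr0 th) (eq_prim_root_expr hth) mod0n modn_small //; lia.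
have : (th ^+ n.+1 - 1) * (th ^+ n.+1 + 1) = 0.
  by rewrite -subr_sqr h2 expr1n subrr.
move/eqP; rewrite mulf_eq0 subr_eq0 (negbTE h1) /= addr_eq0 => /eqP //.
Qed.

Lemma th_pow_eq i j : (i < 2 * n.+1)%N -> (j < 2 * n.+1)%N ->
  (th ^+ i == th ^+ j) = (i == j).
Proof. by move=> hi hj; rewrite (eq_prim_root_expr hth) !modn_small. Qed.

Definition cj (j : nat) := th ^+ j + th ^- j.

Lemma cj_root j : (1 <= j <= n)%N -> (Pch L n.+1).[cj j] = 0.
Proof.
move=> hj; set t := th ^+ j.
have t0 : t != 0 by rewrite expf_neq0 // th_neq0.
have tt : t - t^-1 != 0.
  apply/eqP => e; have : t ^+ 2 = 1.
    by rewrite expr2 -[X in X * _ = _]subr0 -e opprB addrC subrK mulVf.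
  rewrite -exprM -(expr0 th) => /eqP; rewrite th_pow_eq; lia.
have := @Pch_eval _ t n.+1 t0; rewrite /cj -/t.
have -> : t ^+ n.+1 = (-1) ^+ j by rewrite /t -exprM mulnC exprM th_half.

rewrite -(exprVn (-1)) invrN1 subrr => /eqP; rewrite mulf_eq0 (negbTE tt) orbF => /eqP.
done.
Qed.

Lemma cj_inj j k : (1 <= j <= n)%N -> (1 <= k <= n)%N -> cj j = cj k -> j = k.
Proof.
move=> hj hk e.
have t0 : forall i, th ^+ i != 0 by move=> i; rewrite expf_neq0 // th_neq0.
have : (th ^+ j - th ^+ k) * (1 - th ^- j * th ^- k) = 0.
  move: e; rewrite /cj => e.
  have -> : (th ^+ j - th ^+ k) * (1 - th ^- j * th ^- k) =
            (th ^+ j + th ^- j) - (th ^+ k + th ^- k).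
    by field; rewrite !t0.
  by rewrite e subrr.
move/eqP; rewrite mulf_eq0 => /orP[|].
  by rewrite subr_eq0 th_pow_eq => [/eqP||]; lia.
rewrite subr_eq0 => /eqP e2.
have : th ^+ (j + k) = th ^+ 0.
  by rewrite exprD expr0 -[LHS]mulr1 [X in _ * X = _]e2; field; rewrite !t0.
move/eqP; rewrite th_pow_eq; lia.
Qed.

Lemma Pch_rootP c :
  (Pch L n.+1).[c] = 0 <-> exists2 j, (1 <= j <= n)%N & c = cj j.
Proof.
split; last by case=> j hj ->; apply: cj_root.
move=> hc.
set rs := [seq cj j | j <- iota 1 n].
have memrs j : (j \in iota 1 n) = (1 <= j <= n)%N by rewrite mem_iota; lia.
case: (boolP (c \in rs)) => [/mapP [j hj ->] | hn].
  by exists j; rewrite -?memrs.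
have hP : Pch L n.+1 != 0 by rewrite -size_poly_eq0 size_Pch.
have hall : all (root (Pch L n.+1)) (c :: rs).
  apply/allP => x; rewrite inE => /orP[/eqP ->|]; first by apply/eqP.
  by move=> /mapP [j hj ->]; apply/eqP/cj_root; rewrite -memrs.
have hu : uniq (c :: rs).
  rewrite cons_uniq hn map_inj_in_uniq ?iota_uniq // => i j hi hj.
  by apply: cj_inj; rewrite -memrs.
have := max_poly_roots hP hall hu.
by rewrite size_Pch /= size_map size_iota ltnn.
Qed.

Lemma cj_neg j : (1 <= j <= n)%N -> cj (n.+1 - j)%N = - cj j.
Proof.
move=> hj; set u := th ^+ (n.+1 - j).
have t0 : th ^+ j != 0 by rewrite expf_neq0 // th_neq0.
have e : u * th ^+ j = -1 by rewrite /u -exprD subnK ?th_half //; lia.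
have hu : u = - th ^- j.
  by apply: (mulIf t0); rewrite e mulNr mulVf.
rewrite /cj -/u hu invrN invrK; ring.
Qed.

Lemma cj_sym c : (exists2 j, (1 <= j <= n)%N & c = cj j) ->
  (exists2 j, (1 <= j <= n)%N & - c = cj j).
Proof.
case=> j hj ->; exists (n.+1 - j)%N; first lia.
by rewrite cj_neg.
Qed.

End Roots.

Section Ker.
Variables (K : fieldType) (n : nat) (b : K).

Definition wv (v : 'rV[K]_n.+1) (k : nat) : K :=
  if (k < n.+1)%N then v 0 (inord k) else 0.

Lemma wv_if v k : (if (k < n.+1)%N then wv v k else 0) = wv v k.
Proof. by rewrite /wv; case: (k < n.+1)%N. Qed.

Lemma sum_sel N (w : nat -> K) k :
  \sum_(i < N) w i * ((i : nat) == k)%:R = if (k < N)%N then w k else 0.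
Proof.
case: (ltnP k N) => hk.
  rewrite (bigD1 (Ordinal hk)) //= eqxx mulr1 big1 ?addr0 // => i hi.
  rewrite (_ : ((i : nat) == k) = false) ?mulr0 //.
  by apply/negbTE; apply: contra hi => /eqP e; apply/eqP/val_inj.
rewrite big1 // => i _; rewrite (_ : ((i : nat) == k) = false) ?mulr0 //.
by apply/negbTE; have := ltn_ord i; lia.
Qed.

Lemma mulT_entry v (j : 'I_n.+1) :
  (v *m tridiag n.+1 b) 0 j =
  b * wv v j + (if (j : nat) is j'.+1 then wv v j' else 0) + wv v j.+1.
Proof.
rewrite mxE.
transitivity (\sum_(i < n.+1) (b * (wv v i * ((i : nat) == j)%:R)
   + wv v i * ((i : nat).+1 == j)%:R + wv v i * ((i : nat) == j.+1)%:R)).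
  apply: eq_bigr => i _; rewrite /wv ltn_ord inord_val !mxE.
  have -> : (i == j) = ((i : nat) == j) by [].
  rewrite [(j.+1 == i)%N]eq_sym.
  case: eqP => e1; case: eqP => e2; case: eqP => e3 /=; try lia;
    rewrite ?mulr1 ?mulr0 ?addr0 ?add0r ?[_ * b]mulrC //.


rewrite !big_split /= -mulr_sumr sum_sel wv_if sum_sel wv_if; congr (_ + _ + _).
case: (nat_of_ord j) => [|j'].
  by rewrite big1 // => i _; rewrite mulr0.
by under eq_bigr do rewrite eqSS; rewrite sum_sel wv_if.
Qed.

Definition sv k := (Pch K k).[- b].

Lemma svSS k : sv k.+2 = - b * sv k.+1 - sv k.
Proof. by rewrite /sv PchSS !hornerE. Qed.

Lemma sv0 : sv 0 = 0. Proof. by rewrite /sv /= horner0. Qed.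
Lemma sv1 : sv 1 = 1. Proof. by rewrite /sv /= hornerC. Qed.

Lemma wv_out v : wv v n.+1 = 0.
Proof. by rewrite /wv ltnn. Qed.

Lemma ker_iff :
  (exists v : 'rV[K]_n.+1, v != 0 /\ v *m tridiag n.+1 b = 0) <-> sv n.+2 = 0.
Proof.
split.
- case=> v [vn0 hv].
  have eq j : (j < n.+1)%N ->
      b * wv v j + (if j is j'.+1 then wv v j' else 0) + wv v j.+1 = 0.
    move=> hj; have := mulT_entry v (Ordinal hj); rewrite hv mxE /= => <-. done.
  set w0 := wv v 0.
  have rec k : (k <= n)%N -> wv v k = w0 * sv k.+1 /\ wv v k.+1 = w0 * sv k.+2.
    elim: k => [_|k IH hk].
      rewrite sv1 mulr1 svSS sv1 sv0; split => //.
      have := eq 0%N isT; rewrite addr0 -/w0 => /eqP; rewrite addrC addr_eq0 => /eqP ->.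
      ring.
    have [IH1 IH2] := IH (ltnW hk); split => //.
    have := eq k.+1 (hk : (k.+1 < n.+1)%N); rewrite IH1 IH2 => /eqP.
    rewrite addrC addr_eq0 => /eqP ->.
rewrite !svSS; ring.
  have [_ hn] := rec n (leqnn n).
  rewrite wv_out in hn.
  have w00 : w0 != 0.
    apply: contra vn0 => /eqP w00; apply/eqP/rowP => j; rewrite mxE.
    have [hj _] := rec j (ltn_ord j : (j <= n)%N).
    move: hj; rewrite /wv ltn_ord inord_val => ->; by rewrite w00 mul0r.
  by move/eqP: hn; rewrite eq_sym mulf_eq0 (negbTE w00) => /eqP.
- move=> hs; exists (\row_(j < n.+1) sv j.+1).
  have ew k : (k <= n.+1)%N -> wv (\row_(j < n.+1) sv j.+1) k = sv k.+1.
    move=> hk; rewrite /wv; case: ifP => h; first by rewrite mxE inordK.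
    by have -> : k = n.+1 by lia.
  split.
    apply/eqP => /rowP /(_ 0); rewrite !mxE sv1 => /eqP; by rewrite oner_eq0.
  apply/rowP => j; rewrite mulT_entry mxE.
  have hj := ltn_ord j.
  rewrite !ew //; last lia.
  case E: (nat_of_ord j) => [|j'].
    by rewrite svSS sv1 sv0; ring.
  rewrite ew; last lia.
  by rewrite [sv j'.+3]svSS; ring.
Qed.

End Ker.

Lemma unit_tridiag (L : fieldType) n (th : L)
  (hth : (2 * n.+2)%N.-primitive_root th) (b : L) :
  tridiag n.+1 b \in unitmx <->
  ~ (exists2 j, (1 <= j <= n.+1)%N & b = cj L th j).
Proof.
rewrite -unitP'; split.
- move=> h [j hj e].
  have : sv L b n.+2 = 0.
    rewrite /sv; apply/(Pch_rootP L n.+1 th hth);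
    by apply: (cj_sym L n.+1 th hth); exists j.
  move/(ker_iff L n b) => [v [vn0 hv]].
  by move/eqP: vn0; apply; apply: h.
- move=> h v hv; case: (boolP (v == 0)) => [/eqP //| vn0]; exfalso.
  have hr : sv L b n.+2 = 0 by apply/(ker_iff L n b); exists v.
  have := proj1 (Pch_rootP L n.+1 th hth _) hr.
  move=> /(cj_sym L n.+1 th hth); rewrite opprK; exact: h.
Qed.

Theorem theorem2p4 (F : finFieldType) (n : nat) (a : F)
  (L : fieldType) (f : {rmorphism F -> L}) (mu theta : L) :
  odd #|F| -> (1 <= n)%N -> coprime n.+1 #|F| ->
  mu ^+ 2 = -1 -> (2 * n.+1)%N.-primitive_root theta ->
  is_LCD (gen_Cn n a) <->
  (forall i : nat, (1 <= i <= n)%N ->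
     f a != - mu + theta ^+ i + theta ^- i /\ f a != mu + theta ^+ i + theta ^- i).
Proof.
move=> _ hn _ hmu hth.
case: n hn hth => [//|n] _ hth.
rewrite LCD_iff (@factor_unit _ _ f _ _ _ hmu) !(unit_tridiag _ _ _ hth); split.
- move=> [h1 h2] i hi; split; apply/eqP => e.
    by apply: h1; exists i => //; rewrite e /cj; ring.
  by apply: h2; exists i => //; rewrite e /cj; ring.
- move=> h; split => -[j hj e]; have [h1 h2] := h j hj.
    move/eqP: h1; apply; rewrite (_ : f a = cj L theta j - mu).
      by rewrite /cj; ring.
    by rewrite -e; ring.
  move/eqP: h2; apply; rewrite (_ : f a = cj L theta j + mu).
    by rewrite /cj; ring.
  by rewrite -e; ring.
Qed.
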